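(* Let $H$ be a Heyting algebra, $f:H\to H$ a strong monotone function and $a\in H$. If $f$ has a least fixed point $\mu.f$, then the functions $x\mapsto a\to f(x)$ and $x\mapsto a\wedge f(x)$ have least fixed points, and $\mu.(a\to f)=a\to\mu.f$ and $\mu.(a\wedge f)=a\wedge\mu.f$.
   Context: A monotone function $f:H\to H$ on a Heyting algebra is strong if $x\wedge f(y)\le f(x\wedge y)$ for all $x,y\in H$. For a monotone $g$, $\mu.g$ denotes the least prefixed point of $g$ (least $p$ with $g(p)\le p$), which when it exists is the least fixed point. *)

(* Defs.v *)
From mathcomp Require Import all_boot all_order.
Set Implicit Arguments. Unset Strict Implicit. Unset Printing Implicit Defensive.
Import Order.TTheory.
Local Open Scope order_scope.

Definition is_heyting_imp (d : Order.disp_t) (H : tbLatticeType d)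
  (imp : H -> H -> H) : Prop :=
  forall x y z : H, (z <= imp x y) = (z `&` x <= y).

Definition monotone (d : Order.disp_t) (H : porderType d) (f : H -> H) : Prop :=
  forall x y : H, x <= y -> f x <= f y.

Definition strong (d : Order.disp_t) (H : latticeType d) (f : H -> H) : Prop :=
  forall x y : H, x `&` f y <= f (x `&` y).

Definition is_mu (d : Order.disp_t) (H : porderType d) (g : H -> H) (p : H) : Prop :=
  g p <= p /\ forall q : H, g q <= q -> p <= q.

(* Main.v *)
Require Import Defs.
From mathcomp Require Import all_boot all_order.
Import Order.TTheory.
Local Open Scope order_scope.

Theorem mainTheorem6 (d : Order.disp_t) (H : tbLatticeType d)
  (imp : H -> H -> H) (Himp : is_heyting_imp imp)
  (f : H -> H) (fmono : monotone f) (fstrong : strong f)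
  (a : H) (muf : H) (Hmuf : is_mu f muf) :
  is_mu (fun x => imp a (f x)) (imp a muf) /\
  is_mu (fun x => a `&` f x) (a `&` muf).
Proof.
  case: Hmuf => fmu mule.
  have ev : forall y, imp a y `&` a <= y.
    by move=> y; rewrite -Himp.
  have fixmu : muf <= f muf by apply: mule; apply: fmono.
  split; split.
  - rewrite Himp.
    apply: le_trans (fmu).
    have h1 : imp a (f (imp a muf)) `&` a <= a `&` f (imp a muf).
      by rewrite lexI; apply/andP; split; [exact: leIr | exact: ev].
    apply: le_trans h1 _.
    apply: le_trans (fstrong _ _) _.
    apply: fmono. by rewrite meetC; apply: ev.
  - move=> q /= hq.
    have fq : f q <= q.
      apply: le_trans hq. by rewrite Himp leIl.
    have mq := mule q fq.
    apply: le_trans hq.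
    rewrite Himp. apply: le_trans (ev _) _.
    apply: le_trans fixmu _. by apply: fmono.
  - rewrite lexI leIl /=.
    apply: le_trans fmu.
    apply: le_trans (leIr _ _) _. apply: fmono. exact: leIr.
  - move=> q /= hq.
    have : muf <= imp a q.
      apply: mule. rewrite Himp.
      apply: le_trans hq. rewrite lexI leIr /= meetC.
      apply: le_trans (fstrong _ _) _. apply: fmono. by rewrite meetC; apply: ev.
    by rewrite Himp meetC.
Qed.
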